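(* Let $S$ be the standard form on $\mathbb{R}^{2m}$ and let $F$ be a closed $S$-monotone set in $\mathbb{R}^{2m}$ such that $\psi_F(y)\ge\frac12S(y,y)$ for all $y\in\mathbb{R}^{2m}$. Then $H:=\{x:\psi_F(x)=\frac12S(x,x)\}\in\mathcal{M}(S)$, and for every $G\in\mathcal{M}(S)$: $$F\subset G\iff G=H\iff\psi_G=\psi_F\iff\psi_G\le\psi_F.$$
   Context: Standard form on $\mathbb{R}^{2m}$: $S((r,s),(u,v)):=\langle s,u\rangle+\langle r,v\rangle$, $r,s,u,v\in\mathbb{R}^m$. A set $G$ is $S$-monotone if $S(x-y,x-y)\ge0$ for $x,y\in G$; maximal if not a strict subset of another $S$-monotone set; $\mathcal{M}(S)$ is the family of maximal $S$-monotone sets. For a closed set $F\subset\mathbb{R}^{2m}$, $\psi_F(y):=\sup_{x\in F}(S(x,y)-\frac12S(x,x))$. *)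

(* Defs.v *)
(* R^{2m} is represented as pairs (r,s) of row
   vectors in R^m, with the product topology. *)
From HB Require Import structures.
From mathcomp Require Import all_boot all_order all_algebra.
From mathcomp Require Import all_classical all_reals all_analysis.
Set Implicit Arguments. Unset Strict Implicit. Unset Printing Implicit Defensive.
Import Order.TTheory GRing.Theory Num.Theory.
Import numFieldNormedType.Exports.
Local Open Scope classical_set_scope.
Local Open Scope ring_scope.

Notation R2m R m := ('rV[R]_m * 'rV[R]_m)%type (only parsing).

Definition dotv (R : realType) (m : nat) (a b : 'rV[R]_m) : R :=
  \sum_(i < m) a 0 i * b 0 i.

Definition Sform (R : realType) (m : nat) (x y : R2m R m) : R :=
  dotv x.2 y.1 + dotv x.1 y.2.

Definition subv (R : realType) (m : nat) (x y : R2m R m) : R2m R m :=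
  (x.1 - y.1, x.2 - y.2).

Definition Smonotone (R : realType) (m : nat) (G : set (R2m R m)) : Prop :=
  forall x y, G x -> G y -> 0 <= Sform (subv x y) (subv x y).

Definition maxSmonotone (R : realType) (m : nat) (G : set (R2m R m)) : Prop :=
  Smonotone G /\
  forall G' : set (R2m R m), Smonotone G' -> G `<=` G' -> G' = G.

Definition psi (R : realType) (m : nat) (F : set (R2m R m)) (y : R2m R m)
  : \bar R :=
  ereal_sup [set ((Sform x y - Sform x x / 2)%:E) | x in F].

(* Main.v *)
Require Import Defs.
From HB Require Import structures.
From mathcomp Require Import all_boot all_order all_algebra.
From mathcomp Require Import all_classical all_reals all_analysis.
From mathcomp Require Import ring lra.
Import Order.TTheory GRing.Theory Num.Theory.
Import numFieldNormedType.Exports.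
Local Open Scope classical_set_scope.
Local Open Scope ring_scope.

Section Aux.
Variables (R : realType) (m : nat).
Implicit Types (a b c : 'rV[R]_m) (x y z : R2m R m).

Lemma dotvC a b : dotv a b = dotv b a.
Proof. by apply: eq_bigr => i _; rewrite mulrC. Qed.

Lemma dotvDl a b c : dotv (a + b) c = dotv a c + dotv b c.
Proof. by rewrite /dotv -big_split; apply: eq_bigr => i _; rewrite mxE mulrDl. Qed.

Lemma dotvBl a b c : dotv (a - b) c = dotv a c - dotv b c.
Proof.
rewrite /dotv -sumrB; apply: eq_bigr => i _.
by rewrite !mxE mulrBl.
Qed.

Lemma dotvZl (t : R) a c : dotv (t *: a) c = t * dotv a c.
Proof. by rewrite /dotv mulr_sumr; apply: eq_bigr => i _; rewrite mxE mulrA. Qed.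

Lemma dotvNl a c : dotv (- a) c = - dotv a c.
Proof. by rewrite /dotv -sumrN; apply: eq_bigr => i _; rewrite mxE mulNr. Qed.

Lemma dotvNr a c : dotv c (- a) = - dotv c a.
Proof. by rewrite dotvC dotvNl dotvC. Qed.

Lemma dotvDr a b c : dotv c (a + b) = dotv c a + dotv c b.
Proof. by rewrite dotvC dotvDl !(dotvC c). Qed.

Lemma dotvBr a b c : dotv c (a - b) = dotv c a - dotv c b.
Proof. by rewrite dotvC dotvBl !(dotvC c). Qed.

Lemma dotvZr (t : R) a c : dotv c (t *: a) = t * dotv c a.
Proof. by rewrite dotvC dotvZl dotvC. Qed.

Lemma SformE x y : Sform x y = dotv x.2 y.1 + dotv y.2 x.1.
Proof. by rewrite /Sform (dotvC x.1). Qed.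

Lemma SformC x y : Sform x y = Sform y x.
Proof. by rewrite !SformE addrC. Qed.

Lemma Ssub x y :
  Sform (subv x y) (subv x y) = Sform x x - 2 * Sform x y + Sform y y.
Proof.
rewrite !SformE /subv /= !dotvBl !dotvBr; ring.
Qed.

Lemma Ssub_sym x y : Sform (subv x y) (subv x y) = Sform (subv y x) (subv y x).
Proof. rewrite !Ssub (SformC y x); ring. Qed.

Lemma psi_ge (F : set (R2m R m)) z y : F z ->
  ((Sform z y - Sform z z / 2)%:E <= psi F y)%E.
Proof. by move=> Fz; apply: ereal_sup_ubound; exists z. Qed.

Lemma psi_ub (F : set (R2m R m)) y (c : R) :
  (forall z, F z -> Sform z y - Sform z z / 2 <= c) -> (psi F y <= c%:E)%E.
Proof.
by move=> H; apply: ge_ereal_sup => _ [z Fz <-]; rewrite lee_fin; apply: H.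
Qed.

Lemma psi_sub (A B : set (R2m R m)) y : A `<=` B -> (psi A y <= psi B y)%E.
Proof.
by move=> AB; apply: le_ereal_sup => _ [z Az <-]; exists z => //; apply: AB.
Qed.

Lemma mono_pair z y : 0 <= Sform (subv y z) (subv y z) ->
  Sform z y - Sform z z / 2 <= Sform y y / 2.
Proof. rewrite Ssub (SformC y z) => h; lra. Qed.

Lemma mono_pair' z y : Sform z y - Sform z z / 2 <= Sform y y / 2 ->
  0 <= Sform (subv y z) (subv y z).
Proof. rewrite Ssub (SformC y z) => h; lra. Qed.

Lemma lim_arg (a b : R) : (forall t : R, 0 < t <= 1 -> t * a + t ^+ 2 * b <= 0) -> a <= 0.
Proof.
move=> H; rewrite leNgt; apply/negP => a0.
pose s := a + `|b|.
have s0 : 0 < s by rewrite /s; have := normr_ge0 b; lra.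
have hb : 0 <= `|b| + b by have := ler_norm (- b); rewrite normrN; lra.
pose t := a / s.
have ts : t * s = a by rewrite /t mulfVK // gt_eqF.
have t0 : 0 < t by rewrite /t divr_gt0.
have t1 : t <= 1 by rewrite /t ler_pdivrMr // mul1r /s; have := normr_ge0 b; lra.
have := H t (andb_true_intro (conj t0 t1)).
move=> h.
have h2 : (t * a + t ^+ 2 * b) * s ^+ 2 <= 0.
  by rewrite pmulr_lle0 // exprn_gt0.
have e : (t * a + t ^+ 2 * b) * s ^+ 2 = a ^+ 2 * (a + (`|b| + b)).
  have -> : (t * a + t ^+ 2 * b) * s ^+ 2 = (t * s) * a * s + (t * s) ^+ 2 * b by ring.
  rewrite ts /s; ring.
rewrite e in h2.
have : 0 < a ^+ 2 * (a + (`|b| + b)).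
  by apply: mulr_gt0; [rewrite exprn_gt0 | lra].
lra.
Qed.

Definition seg x y (t : R) : R2m R m :=
  (x.1 + t *: (y.1 - x.1), x.2 + t *: (y.2 - x.2)).

Lemma Sseg_l z x y t : Sform z (seg x y t) = (1 - t) * Sform z x + t * Sform z y.
Proof. rewrite !SformE /seg /= !dotvDl !dotvDr !dotvZl !dotvZr !dotvBl !dotvBr; ring. Qed.

Lemma Sseg x y t : Sform (seg x y t) (seg x y t) =
  Sform x x + 2 * t * (Sform x y - Sform x x) + t ^+ 2 * Sform (subv y x) (subv y x).
Proof.
rewrite !SformE /seg /subv /= !dotvDl !dotvDr !dotvZl !dotvZr !dotvBl !dotvBr !dotvNl !dotvNr; ring.
Qed.

Lemma key (F : set (R2m R m)) x y :
  (forall y, ((Sform y y / 2)%:E <= psi F y)%E) ->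
  psi F x = (Sform x x / 2)%:E ->
  ((Sform x y - Sform x x / 2)%:E <= psi F y)%E.
Proof.
move=> hyp hx.
case E: (psi F y) => [p| |]; last 2 first.
- by rewrite leey.
- by have := hyp y; rewrite E leeNy_eq.
rewrite lee_fin.
have Ht : forall t : R, 0 < t <= 1 ->
    Sform (seg x y t) (seg x y t) / 2 <= (1 - t) * (Sform x x / 2) + t * p.
  move=> t /andP[t0 t1].
  have := hyp (seg x y t).
  have : (psi F (seg x y t) <= ((1 - t) * (Sform x x / 2) + t * p)%:E)%E.
    apply: psi_ub => z Fz.
    have h1 := @psi_ge F z x Fz; rewrite hx lee_fin in h1.
    have h2 := @psi_ge F z y Fz; rewrite E lee_fin in h2.
    rewrite Sseg_l.
    have e : (1 - t) * Sform z x + t * Sform z y - Sform z z / 2 =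
      (1 - t) * (Sform z x - Sform z z / 2) + t * (Sform z y - Sform z z / 2) by ring.
    rewrite e lerD //; [apply: ler_wpM2l | apply: ler_wpM2l] => //; lra.
  move=> h1 h2; have := le_trans h2 h1; by rewrite lee_fin.
have : Sform x y - Sform x x / 2 - p <= 0.
  apply (lim_arg (Sform x y - Sform x x / 2 - p) (Sform (subv y x) (subv y x) / 2)); move=> t ht.
  have := Ht t ht; rewrite Sseg => h.
  have e : t * (Sform x y - Sform x x / 2 - p) + t ^+ 2 * (Sform (subv y x) (subv y x) / 2)
    = (Sform x x + 2 * t * (Sform x y - Sform x x) + t ^+ 2 * Sform (subv y x) (subv y x)) / 2
      - ((1 - t) * (Sform x x / 2) + t * p)  by field.
  by rewrite e subr_le0.
lra.
Qed.

End Aux.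

Arguments key {R m F} x y _ _.
Arguments psi_ge {R m F} z y _.
Arguments psi_sub {R m A B} y _.
Arguments psi_ub {R m F y c} _.
Arguments Ssub_sym {R m} x y.
Arguments Ssub {R m} x y.
Arguments mono_pair {R m z y} _.
Arguments mono_pair' {R m z y} _.
Lemma lemma7_aux (R : realType) (m : nat) (F : set (R2m R m)) :
  Smonotone F ->
  (forall y : R2m R m, ((Sform y y / 2)%:E <= psi F y)%E) ->
  forall H : set (R2m R m), H = [set x | psi F x = (Sform x x / 2)%:E] ->
  maxSmonotone H /\
  forall G : set (R2m R m), maxSmonotone G ->
    (F `<=` G <-> G = H) /\
    (G = H <-> psi G = psi F) /\
    (psi G = psi F <-> forall y, (psi G y <= psi F y)%E).
Proof.
move=> mF hyp H ->.
have inH : forall x, (forall z, F z -> 0 <= Sform (subv x z) (subv x z)) ->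
    psi F x = (Sform x x / 2)%:E.
  move=> x hx; apply/le_anti; rewrite hyp andbT.
  by apply: psi_ub => z Fz; apply: mono_pair; apply: hx.
have FH : F `<=` [set x | psi F x = (Sform x x / 2)%:E].
  by move=> x Fx; apply: inH => z Fz; apply: mF.
have monoH : Smonotone [set x | psi F x = (Sform x x / 2)%:E].
  move=> x y Hx Hy; have := key x y hyp Hx; rewrite Hy lee_fin => h.
  by rewrite Ssub_sym; apply: mono_pair'.
have maxH : maxSmonotone [set x | psi F x = (Sform x x / 2)%:E].
  split => // G' mG' HG'; apply/seteqP; split => // z G'z.
  by apply: inH => w Fw; apply: mG' => //; apply: HG'; apply: FH.
split => // G [mG maxG].
have GH : G `<=` [set x | psi F x = (Sform x x / 2)%:E] ->
    G = [set x | psi F x = (Sform x x / 2)%:E].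
  by move=> sub; symmetry; apply: maxG.
have psiGx : forall x, G x -> psi G x = (Sform x x / 2)%:E.
  move=> x Gx; apply/le_anti; apply/andP; split.
    by apply: psi_ub => z Gz; apply: mono_pair; apply: mG.
  have := psi_ge x x Gx; have -> : Sform x x - Sform x x / 2 = Sform x x / 2 by field.
  by [].
have eq1 : F `<=` G <-> G = [set x | psi F x = (Sform x x / 2)%:E].
  split; last by move=> ->.
  move=> FG; apply: GH => x Gx; apply: inH => z Fz; apply: mG => //; exact: FG.
have eq2 : G = [set x | psi F x = (Sform x x / 2)%:E] <-> psi G = psi F.
  split.
    move=> ->; apply/funext => y; apply/le_anti/andP; split; last exact: psi_sub.
    by apply: ge_ereal_sup => _ [x Hx <-]; apply: key.
  move=> e; apply: GH => x Gx /=; rewrite -e; exact: psiGx.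
split => //; split => //.
split; first by move=> -> y.
move=> le; apply/eq2/eq1 => z Fz.
have mGz : Smonotone (G `|` [set z]).
  have hz : forall x, G x -> 0 <= Sform (subv z x) (subv z x).
    move=> x Gx; apply: mono_pair'.
    have h1 := psi_ge x z Gx; have h2 := le z; rewrite (FH z Fz) in h2.
    by have := le_trans h1 h2; rewrite lee_fin.
  move=> a b [Ga|->] [Gb|->]; first exact: mG.
  - by rewrite Ssub_sym; apply: hz.
  - by apply: hz.
  - by rewrite Ssub; lra.
have := maxG _ mGz (@subsetUl _ _ _) => e.
by rewrite -e; right.
Qed.

Theorem lemma7 (R : realType) (m : nat) (F : set (R2m R m)) :
  closed F -> Smonotone F ->
  (forall y : R2m R m, ((Sform y y / 2)%:E <= psi F y)%E) ->
  let H := [set x | psi F x = (Sform x x / 2)%:E] in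
  maxSmonotone H /\
  forall G : set (R2m R m), maxSmonotone G ->
    (F `<=` G <-> G = H) /\
    (G = H <-> psi G = psi F) /\
    (psi G = psi F <-> forall y, (psi G y <= psi F y)%E).
Proof.
move=> cF mF hyp H.
have := @lemma7_aux R m F mF hyp H erefl.
by [].
Qed.
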